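(* Let $\phi$ be a formula, $\xi,\eta$ models, and $k,m\in\omega$ with $m>0$, such that: (1) $\mathrm{Sub}(\phi,\langle k,0\rangle,\xi)=\mathrm{Sub}(\phi,\langle k+m,0\rangle,\xi)$; (2) $\xi(\mathbf t,p)=\eta(\mathbf t,p)$ for all $\mathbf t<\langle k+m,0\rangle$ and all $p\in Var$; (3) $\eta(s_1,s_2,p)=\eta(s_1+m,s_2,p)$ for all $\mathbf s\ge\langle k,0\rangle$ and all $p\in Var$; (4) whenever $\psi\,\mathtt U\,\theta\in\mathrm{Sub}(\phi)$ and $\xi\models_{\langle k,0\rangle}\psi\,\mathtt U\,\theta$, there is $\mathbf r$ with $\langle k,0\rangle\le\mathbf r<\langle k+m,0\rangle$ and $\xi\models_{\mathbf r}\theta$. Then (a) $\mathrm{Sub}(\phi,\mathbf t,\xi)=\mathrm{Sub}(\phi,\mathbf t,\eta)$ for all $\mathbf t<\langle k+m,0\rangle$; and (b) $\mathrm{Sub}(\phi,\mathbf s,\eta)=\mathrm{Sub}(\phi,\langle s_1+m,s_2\rangle,\eta)$ for all $\mathbf s\ge\langle k,0\rangle$.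
   Context: Fix $Var=\{p_n : n\in\omega\}$. The formulas of $L([1],[\omega],\mathtt u,\mathtt U)$ form the smallest set containing $Var$ and closed under $\neg\phi$, $[1]\phi$, $[\omega]\phi$, $(\phi\wedge\psi)$, $(\phi\,\mathtt u\,\psi)$, $(\phi\,\mathtt U\,\psi)$. Time instants are pairs $\mathbf t=\langle t_1,t_2\rangle\in\omega\times\omega$ ordered lexicographically ($\langle i,j\rangle\le\langle k,l\rangle$ iff $i<k$, or $i=k$ and $j\le l$). A model is a function $\xi:\omega\times\omega\times Var\to\{0,1\}$; we write $\xi(\mathbf t,p)$ for $\xi(t_1,t_2,p)$. Satisfaction: $\xi\models_{\mathbf r}p$ iff $\xi(r_1,r_2,p)=1$; $\neg,\wedge$ classical; $\xi\models_{\mathbf r}[1]\phi$ iff $\xi\models_{\langle r_1,r_2+1\rangle}\phi$; $\xi\models_{\mathbf r}[\omega]\phi$ iff $\xi\models_{\langle r_1+1,0\rangle}\phi$; $\xi\models_{\mathbf r}\phi\,\mathtt u\,\psi$ iff there is $k\in\omega$ with $\xi\models_{\langle r_1,r_2+k\rangle}\psi$ and $\xi\models_{\langle r_1,r_2+i\rangle}\phi$ for all $0\le i<k$; $\xi\models_{\mathbf r}\phi\,\mathtt U\,\psi$ iff there is $\mathbf s\ge\mathbf r$ with $\xi\models_{\mathbf s}\psi$ and $\xi\models_{\mathbf t}\phi$ for all $\mathbf r\le\mathbf t<\mathbf s$. $\mathrm{Sub}(\phi)$ is the set of subformulas of $\phi$, and $\mathrm{Sub}(\phi,\mathbf t,\xi)=\{\psi\in\mathrm{Sub}(\phi)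 : \xi\models_{\mathbf t}\psi\}$. *)

(* Defs.v *)
From Stdlib Require Import Arith.

(* Formulas of L([1],[omega],u,U); propositional variable p_n is [Var n]. *)
Inductive form : Type :=
| Var : nat -> form
| Neg : form -> form
| Next1 : form -> form
| NextW : form -> form
| And : form -> form -> form
| Until : form -> form -> form  (* phi u psi  (within the current omega-block) *)
| UNTIL : form -> form -> form. (* phi U psi  (along the lexicographic order) *)

(* Time instants: pairs of naturals, lexicographic order. *)
Definition tlex (t s : nat * nat) : Prop :=
  fst t < fst s \/ (fst t = fst s /\ snd t <= snd s).
Definition tlt (t s : nat * nat) : Prop := tlex t s /\ t <> s.

(* A model: xi t1 t2 n is the truth value of p_n at <t1,t2>. *)
Definition model := nat -> nat -> nat -> bool.

Fixpoint sat (xi : model) (r : nat * nat) (f : form) {struct f} : Prop :=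
  match f with
  | Var n => xi (fst r) (snd r) n = true
  | Neg g => ~ sat xi r g
  | Next1 g => sat xi (fst r, S (snd r)) g
  | NextW g => sat xi (S (fst r), 0) g
  | And g h => sat xi r g /\ sat xi r h
  | Until g h => exists k, sat xi (fst r, snd r + k) h /\
                   forall i, i < k -> sat xi (fst r, snd r + i) g
  | UNTIL g h => exists s, tlex r s /\ sat xi s h /\
                   forall t, tlex r t -> tlt t s -> sat xi t g
  end.

Fixpoint subf (psi phi : form) {struct phi} : Prop :=
  psi = phi \/
  match phi with
  | Var _ => False
  | Neg g | Next1 g | NextW g => subf psi g
  | And g h | Until g h | UNTIL g h => subf psi g \/ subf psi h
  end.

(* Sub(phi,t,xi) = Sub(phi,s,eta) *)
Definition SubEq (phi : form) (xi : model) (t : nat * nat) (eta : model) (s : nat * nat) : Prop :=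
  forall psi, subf psi phi -> (sat xi t psi <-> sat eta s psi).

(* Main.v *)
Require Import Defs.
From Stdlib Require Import Arith Lia Setoid.

Lemma tlt_iff t s : tlt t s <-> (fst t < fst s \/ (fst t = fst s /\ snd t < snd s)).
Proof.
  destruct t as [a b], s as [c d]; unfold tlt, tlex; simpl; split.
  - intros [H1 H2]. destruct H1 as [H1|[H1 H3]]; [now left|].
    right; split; [assumption|]. destruct (Nat.eq_dec b d); [|lia]. subst; exfalso; apply H2; reflexivity.
  - intros H; split; [lia|]. intros E; injection E; intros; subst; lia.
Qed.


Ltac lex := repeat rewrite tlt_iff in *; unfold tlex in *; simpl in *; lia.

Lemma subf_self g : subf g g.
Proof. destruct g; left; reflexivity. Qed.

Lemma subf_trans a b c : subf a b -> subf b c -> subf a c.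
Proof.
  induction c; simpl; intros Hab [E|H]; subst; auto; try tauto;
  right; try (destruct H; [left|right]); auto.
Qed.

Ltac subtac := match goal with Hsub : subf _ ?phi |- _ => eapply subf_trans; [|exact Hsub]; simpl; right; first [apply subf_self | left; apply subf_self | right; apply subf_self] end.

Lemma dich t u : tlt t u \/ tlex u t.
Proof. destruct t as [a b], u as [c d]. rewrite tlt_iff. unfold tlex; simpl; lia. Qed.

Lemma combine M t u g h : tlex t u -> sat M u (UNTIL g h) ->
  (forall t', tlex t t' -> tlt t' u -> sat M t' g) -> sat M t (UNTIL g h).
Proof.
  intros Htu [s [Hus [Hh Hg]]] Hg'. exists s; split; [lex|split; auto].
  intros t' H1 H2. destruct (dich t' u) as [H|H]; auto.
Qed.

Lemma split_U M t u s g h : tlex t u -> tlex u s -> sat M s h ->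
  (forall t', tlex t t' -> tlt t' s -> sat M t' g) ->
  sat M u (UNTIL g h) /\ (forall t', tlex t t' -> tlt t' u -> sat M t' g).
Proof.
  intros H1 H2 Hh Hg. split.
  - exists s; repeat split; auto. intros t' A B. apply Hg; auto; lex.
  - intros t' A B. apply Hg; auto; lex.
Qed.

Lemma transfer M1 M2 K t s g h :
  (forall t, tlt t K -> (sat M1 t g <-> sat M2 t g)) ->
  (forall t, tlt t K -> (sat M1 t h <-> sat M2 t h)) ->
  tlex t s -> tlt s K -> sat M1 s h -> (forall t', tlex t t' -> tlt t' s -> sat M1 t' g) ->
  sat M2 t (UNTIL g h).
Proof.
  intros Eg Eh H1 H2 Hh Hg. exists s; split; auto; split.
  - apply Eh; auto.
  - intros t' A B. apply Eg; [lex|]. auto.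
Qed.

Theorem mainTheorem14 (phi : form) (xi eta : model) (k m : nat) :
  0 < m ->
  SubEq phi xi (k, 0) xi (k + m, 0) ->
  (forall t, tlt t (k + m, 0) -> forall p, xi (fst t) (snd t) p = eta (fst t) (snd t) p) ->
  (forall s, tlex (k, 0) s -> forall p, eta (fst s) (snd s) p = eta (fst s + m) (snd s) p) ->
  (forall psi theta, subf (UNTIL psi theta) phi -> sat xi (k, 0) (UNTIL psi theta) ->
     exists r, tlex (k, 0) r /\ tlt r (k + m, 0) /\ sat xi r theta) ->
  (forall t, tlt t (k + m, 0) -> SubEq phi xi t eta t) /\
  (forall s, tlex (k, 0) s -> SubEq phi eta s eta (fst s + m, snd s)).
Proof.
  intros Hm H1 H2 H3 H4.
  assert (P : forall f s, tlex (k, 0) s -> (sat eta s f <-> sat eta (fst s + m, snd s) f)).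
  { induction f; intros [a b] Hs; simpl.
    - pose proof (H3 (a, b) Hs n) as E; simpl in E; rewrite E; tauto.
    - rewrite (IHf (a, b) Hs). tauto.
    - apply (IHf (a, S b)). lex.
    - replace (S (a + m)) with (S a + m) by lia. apply (IHf (S a, 0)). lex.
    - rewrite (IHf1 (a, b) Hs), (IHf2 (a, b) Hs). tauto.
    - split; intros [j [Hj Hi]]; exists j; split.
      + apply (IHf2 (a, b + j)); [lex|]; simpl in *; auto.
      + intros i Hi'. apply (IHf1 (a, b + i)); [lex|]; simpl in *; auto.
      + apply (IHf2 (a, b + j)); [lex|]; simpl in *; auto.
      + intros i Hi'. apply (IHf1 (a, b + i)); [lex|]; simpl in *; auto.
    - split.
      + intros [[c d] [Hu [Hh Hg]]]. exists (c + m, d); split; [lex|split].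
        * apply (IHf2 (c, d)); [lex|auto].
        * intros [e f'] A B. replace e with (e - m + m) by lex.
          apply (IHf1 (e - m, f')); [lex|]. apply Hg; lex.
      + intros [[c d] [Hu [Hh Hg]]]. exists (c - m, d); split; [lex|split].
        * apply (IHf2 (c - m, d)); [lex|]. simpl. replace (c - m + m) with c by lex. auto.
        * intros [e f'] A B. apply (IHf1 (e, f')); [lex|]. apply Hg; lex. }
  split; [|intros s Hs psi _; apply P; auto].
  assert (R : forall g h, sat eta (k, 0) (UNTIL g h) -> exists r, tlex (k, 0) r /\ tlt r (k + m, 0) /\ sat eta r h /\
            (forall t', tlex (k, 0) t' -> tlt t' r -> sat eta t' g)).
  { intros g h [s [Hs [Hh Hg]]].
    assert (G : forall n s, fst s < n -> tlex (k, 0) s -> sat eta s h ->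
              (forall t', tlex (k, 0) t' -> tlt t' s -> sat eta t' g) ->
              exists r, tlex (k, 0) r /\ tlt r (k + m, 0) /\ sat eta r h /\
              (forall t', tlex (k, 0) t' -> tlt t' r -> sat eta t' g)).
    { induction n; intros [a b] Ha Hs' Hh' Hg'; [lex|].
      destruct (Nat.lt_ge_cases a (k + m)).
      - exists (a, b); split; [auto|split; [lex|split; auto]].
      - apply (IHn (a - m, b)); [lex|lex| |].
        + apply (P h (a - m, b)); [lex|]. simpl.
          replace (a - m + m) with a by lia. auto.
        + intros t' A B. apply Hg'; auto; lex. }
    apply (G (S (fst s)) s); auto. }
  assert (A : forall f, subf f phi -> forall t, tlt t (k + m, 0) -> (sat xi t f <-> sat eta t f)).
  { induction f; intros Hsub [a b] Ht.
    - apply (H2 (a, b)) with (p := n) in Ht. simpl in *. rewrite Ht. tauto.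
    - simpl. rewrite (IHf (ltac:(subtac)) (a, b) Ht). tauto.
    - simpl. apply IHf; [|lex].
      exact (ltac:(subtac)).
    - simpl. assert (Hf : subf f phi) by subtac.
      destruct (Nat.lt_ge_cases (S a) (k + m)).
      + apply IHf; auto; lex.
      + assert (E : S a = k + m) by (lex). rewrite E.
        rewrite <- (H1 f Hf). rewrite (IHf Hf (k, 0)) by (lex).
        apply (P f (k, 0)). lex.
    - assert (Ha : subf f1 phi) by subtac.
      assert (Hb : subf f2 phi) by subtac.
      simpl. rewrite (IHf1 Ha (a, b) Ht), (IHf2 Hb (a, b) Ht). tauto.
    - assert (Ha : subf f1 phi) by subtac.
      assert (Hb : subf f2 phi) by subtac.
      simpl. split; intros [j [Hj Hi]]; exists j; split.
      + apply IHf2; auto; lex.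
      + intros i Hi'. apply IHf1; auto; lex.
      + apply IHf2; auto; lex.
      + intros i Hi'. apply IHf1; auto; lex.
    - assert (Ha : subf f1 phi) by subtac.
      assert (Hb : subf f2 phi) by subtac.
      specialize (IHf1 Ha). specialize (IHf2 Hb).
      assert (IHf1' : forall t, tlt t (k + m, 0) -> (sat eta t f1 <-> sat xi t f1)) by (intros; symmetry; auto).
      assert (IHf2' : forall t, tlt t (k + m, 0) -> (sat eta t f2 <-> sat xi t f2)) by (intros; symmetry; auto).
      split.
      + intros [s [Hs [Hh Hg]]]. destruct (dich s (k + m, 0)) as [HsK|HsK].
        * eapply transfer; eauto.
        * destruct (split_U xi (a, b) (k + m, 0) s f1 f2) as [HU HgK]; auto; [lex|].
          apply (H1 _ Hsub) in HU.
          assert (Ex : exists r, tlex (k, 0) r /\ tlt r (k + m, 0) /\ sat xi r f2 /\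
                    (forall t', tlex (k, 0) t' -> tlt t' r -> sat xi t' f1)).
          { destruct HU as [s' [Hs' [Hh' Hg']]]. destruct (dich s' (k + m, 0)) as [C|C].
            - exists s'; auto.
            - destruct (H4 f1 f2 Hsub) as [r [X [Y Z]]]; [exists s'; auto|].
              exists r; split; [exact X|split; [exact Y|split; [exact Z|]]]. intros t' D E. apply Hg'; auto; lex. }
          destruct Ex as [r [X [Y [Z W]]]].
          assert (HetaK0 : sat eta (k, 0) (UNTIL f1 f2)) by (eapply transfer; eauto).
          apply (P _ (k, 0)) in HetaK0; [|lex].
          apply (combine eta (a, b) (k + m, 0)); [lex|exact HetaK0|].
          intros t' D E. apply IHf1; auto.
      + intros [s [Hs [Hh Hg]]]. destruct (dich s (k + m, 0)) as [HsK|HsK].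
        * eapply transfer; eauto.
        * destruct (split_U eta (a, b) (k + m, 0) s f1 f2) as [HU HgK]; auto; [lex|].
          apply (P _ (k, 0)) in HU; [|lex].
          destruct (R f1 f2 HU) as [r [X [Y [Z W]]]].
          assert (HxiK0 : sat xi (k, 0) (UNTIL f1 f2)) by (eapply transfer; eauto).
          apply (H1 _ Hsub) in HxiK0.
          apply (combine xi (a, b) (k + m, 0)); [lex|exact HxiK0|].
          intros t' D E. apply IHf1'; auto. }
  intros t Ht psi Hpsi. apply A; auto.
Qed.
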